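(* For every $n\ge2$, the problem FGP of gathering all robots (including a faulty one) at a single point in the presence of at most one crash fault is unsolvable under the SSYNC scheduler by any algorithm (of any size $\le n$); i.e., its MAS is $\infty$.
   Context: Model. A swarm consists of $n\ge1$ robots $r_1,\dots,r_n$, modeled as points in $\mathbb R^2$. Each robot $r_i$ has a local right-handed $x$-$y$ coordinate system $Z_i$ whose origin is always the robot's current position, with arbitrary (adversarially chosen, fixed) unit length and axis orientation; robots do not share coordinate systems. The configuration at time $t$ is the multiset $P_t$ of the $n$ robot positions (robots can detect multiplicities). A target function $\phi$ maps each finite multiset $P$ of points of $\mathbb R^2$ with $(0,0)\in P$ to a point $\phi(P)\in\mathbb R^2$. Time is discrete, $t=0,1,2,\dots$. Under the semi-synchronous (SSYNC) scheduler, at each time $t$ an adversary chooses a set of robots to activate; each activated robot $r_i$ observes $P_t$ expressed in $Z_i$, evaluates its target function on this multiset, and moves to the resulting point (interpreted in $Z_i$), arriving before time $t+1$; non-activated robots do not move. Schedules are fair: every robot is activated infinitely often. An algorithm of size $m$ is a set $\Phi$ of $m$ distinct target functions ($m\le n$); an assignment is a surjection $\mathcal A$ from the robots onto $\Phi$, robot $r_i$ using $\mathcal A(r_i)$. $\Phi$ solves a problem if for every assignment, every choice of local coordinate systems, every initial configuration and every fair SSYNC schedule, the resulting execution solves the problem. The MAS of a problem is the least $m$ such that some algorithm of size $m$ solves it, and $\infty$ if no algorithm of any size $m\le n$ solves it. Crash faults. The adversary may choose up to $f$ robots to be faulty and, for each, a time from which it crashes: from then on it never moves again (even when activated); before that it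 behaves correctly. ''Solves under at most $f$ crashes'' quantifies additionally over all such crash patterns. Problem. FGP: starting from any initial configuration, with at most one crashed robot, reach a configuration in which all $n$ robots (faulty ones included) occupy a single point. *)

(* Defs.v *)
From Stdlib Require Import Reals List Permutation Arith Bool.
Import ListNotations.
Open Scope R_scope.

Definition pt := (R * R)%type.
Definition origin : pt := (0, 0).

Definition padd (p q : pt) : pt := (fst p + fst q, snd p + snd q).
Definition psub (p q : pt) : pt := (fst p - fst q, snd p - snd q).

(* A local frame is an orientation-preserving similarity (rotation and
   positive scaling), encoded by (a,b) <> (0,0): the local vector q has
   global displacement  (a q1 - b q2, b q1 + a q2)  (complex multiplication
   by a+bi).  The origin of the frame is always the robot's position. *)
Definition frame_ok (f : pt) : Prop := f <> (0, 0).

Definition cmul (f q : pt) : pt :=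
  (fst f * fst q - snd f * snd q, snd f * fst q + fst f * snd q).

Definition finv (f : pt) : pt :=
  let d := fst f * fst f + snd f * snd f in (fst f / d, - snd f / d).

Definition to_global (f o q : pt) : pt := padd o (cmul f q).
Definition to_local (f o p : pt) : pt := cmul (finv f) (psub p o).

(* A target function: a function on finite multisets (represented as lists,
   the value being required to depend only on the multiset) that contain
   the origin. *)
Definition target_fun := list pt -> pt.

Definition tf_wellformed (phi : target_fun) : Prop :=
  forall P Q, In origin P -> Permutation P Q -> phi P = phi Q.

Definition tf_distinct (phi psi : target_fun) : Prop :=
  exists P, In origin P /\ phi P <> psi P.

Definition algorithm (m : nat) (phi : nat -> target_fun) : Prop :=
  (forall k, (k < m)%nat -> tf_wellformed (phi k)) /\
  (forall k l, (k < m)%nat -> (l < m)%nat -> k <> l -> tf_distinct (phi k) (phi l)).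

Definition assignment (n m : nat) (asg : nat -> nat) : Prop :=
  (forall i, (i < n)%nat -> (asg i < m)%nat) /\
  (forall k, (k < m)%nat -> exists i, (i < n)%nat /\ asg i = k).

(* SSYNC schedule: act t i = robot i activated at time t; fairness. *)
Definition fair (n : nat) (act : nat -> nat -> bool) : Prop :=
  forall i t, (i < n)%nat -> exists t', (t <= t')%nat /\ act t' i = true.

(* Crash pattern with at most one crash: None, or Some (robot j, time c):
   robot j does not move at any time t >= c. *)
Definition crash_ok (n : nat) (cr : option (nat * nat)) : Prop :=
  match cr with None => True | Some (j, _) => (j < n)%nat end.

Definition crashedb (cr : option (nat * nat)) (t i : nat) : bool :=
  match cr with
  | None => false
  | Some (j, c) => andb (Nat.eqb j i) (Nat.leb c t)
  end.

Definition config_list (n : nat) (pos : nat -> pt) : list pt :=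
  map pos (seq 0 n).

Fixpoint exec (n : nat) (phi : nat -> target_fun) (asg : nat -> nat)
    (fr : nat -> pt) (init : nat -> pt) (act : nat -> nat -> bool)
    (cr : option (nat * nat)) (t : nat) : nat -> pt :=
  match t with
  | O => init
  | S t' =>
      let pos := exec n phi asg fr init act cr t' in
      fun i =>
        if andb (act t' i) (negb (crashedb cr t' i)) then
          to_global (fr i) (pos i)
            (phi (asg i) (map (to_local (fr i) (pos i)) (config_list n pos)))
        else pos i
  end.

Definition gathered (n : nat) (pos : nat -> pt) : Prop :=
  forall i j, (i < n)%nat -> (j < n)%nat -> pos i = pos j.

Definition solves_FGP (n m : nat) (phi : nat -> target_fun) : Prop :=
  forall asg fr init act cr,
    assignment n m asg ->
    (forall i, (i < n)%nat -> frame_ok (fr i)) ->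
    fair n act ->
    crash_ok n cr ->
    exists t, gathered n (exec n phi asg fr init act cr t).

(* Main.v *)
Require Import Defs.
From Stdlib Require Import Reals List Permutation Arith.
From Stdlib Require Import Bool Lia Lra Classical ClassicalEpsilon FunctionalExtensionality.

Definition dest (n : nat) (phi : nat -> target_fun) (asg : nat -> nat) (fr : nat -> pt)
  (pos : nat -> pt) (i : nat) : pt :=
  to_global (fr i) (pos i) (phi (asg i) (map (to_local (fr i) (pos i)) (config_list n pos))).

Definition danger n phi asg fr (pos : nat -> pt) (r : nat) : Prop :=
  exists q, (forall j, (j < n)%nat -> j <> r -> pos j = q) /\ pos r <> q /\
            dest n phi asg fr pos r = q.

Definition frozen n phi asg fr (pos : nat -> pt) (r : nat) : Prop :=
  (r < n)%nat /\ danger n phi asg fr pos r /\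
  (forall j, (j < n)%nat -> j <> r -> dest n phi asg fr pos j = pos j).

Definition gsel n phi asg fr (pos : nat -> pt) : option nat :=
  match excluded_middle_informative (exists r, frozen n phi asg fr pos r) with
  | left H => Some (proj1_sig (constructive_indefinite_description _ H))
  | right _ => None
  end.

Lemma gsel_some n phi asg fr pos r : gsel n phi asg fr pos = Some r -> frozen n phi asg fr pos r.
Proof.
  unfold gsel. destruct excluded_middle_informative as [H|H]; [|discriminate].
  destruct (constructive_indefinite_description _ H) as [x Hx]; simpl.
  intro E; injection E; intros <-; exact Hx.
Qed.

Lemma gsel_none n phi asg fr pos : gsel n phi asg fr pos = None -> ~ exists r, frozen n phi asg fr pos r.
Proof.
  unfold gsel. destruct excluded_middle_informative as [H|H]; [discriminate|auto].
Qed.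

Definition pdec (P : Prop) : bool := if excluded_middle_informative P then true else false.

Definition choice n phi asg fr (t : nat) (pos : nat -> pt) : nat -> bool :=
  match gsel n phi asg fr pos with
  | Some r0 => fun i => negb (Nat.eqb i r0)
  | None => if pdec (danger n phi asg fr pos (t mod n)) then fun _ => true
            else fun i => Nat.eqb i (t mod n)
  end.

Definition nxt n phi asg fr (t : nat) (pos : nat -> pt) : nat -> pt :=
  fun i => if Nat.ltb i n && choice n phi asg fr t pos i then dest n phi asg fr pos i else pos i.

Fixpoint sim n phi asg fr (init : nat -> pt) (t : nat) : nat -> pt :=
  match t with
  | O => init
  | S t' => nxt n phi asg fr t' (sim n phi asg fr init t')
  end.

Lemma nxt_ng n phi asg fr t pos : (2 <= n)%nat ->
  ~ gathered n pos -> ~ gathered n (nxt n phi asg fr t pos).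
Proof.
  intros Hn Hng Hg. unfold nxt, choice in Hg.
  assert (Hlt : forall i, (i < n)%nat -> Nat.ltb i n = true) by (intros; apply Nat.ltb_lt; auto).
  destruct (gsel n phi asg fr pos) as [r0|] eqn:Eg.
  - apply gsel_some in Eg. destruct Eg as [_ [_ Hf]].
    apply Hng. intros i j Hi Hj. specialize (Hg i j Hi Hj). cbv beta in Hg; rewrite !Hlt in Hg by auto; simpl in Hg.
    destruct (Nat.eqb_spec i r0), (Nat.eqb_spec j r0); simpl in Hg;
      repeat rewrite Hf in Hg by auto; auto.
  - apply gsel_none in Eg.
    assert (Hr : (t mod n < n)%nat) by (apply Nat.mod_upper_bound; lia).
    set (r := (t mod n)) in *.
    unfold pdec in Hg. destruct excluded_middle_informative as [Hd|Hd].
    + destruct Hd as [q [Hq [Hrq Hdr]]].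
      apply Eg. exists r. split; [exact Hr|]. split; [exists q; auto|].
      intros j Hj Hjr. specialize (Hg j r Hj Hr). cbv beta in Hg; rewrite !Hlt in Hg by auto; simpl in Hg.
      rewrite Hq by auto. congruence.
    + apply Hd.
      set (j0 := if Nat.eqb r 0 then 1%nat else 0%nat).
      assert (Hj0 : (j0 < n)%nat /\ j0 <> r).
      { unfold j0; destruct (Nat.eqb_spec r 0); lia. }
      destruct Hj0 as [Hj0n Hj0r].
      assert (Hne : forall j, j <> r -> Nat.eqb j r = false) by (intros; apply Nat.eqb_neq; auto).
      exists (pos j0).
      assert (Hall : forall j, (j < n)%nat -> j <> r -> pos j = pos j0).
      { intros j Hj Hjr. specialize (Hg j j0 Hj Hj0n). cbv beta in Hg; rewrite !Hlt in Hg by auto; simpl in Hg.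
        rewrite !Hne in Hg by auto. exact Hg. }
      split; [exact Hall|]. split.
      * intro E. apply Hng. intros i j Hi Hj.
        assert (forall k, (k < n)%nat -> pos k = pos j0).
        { intros k Hk. destruct (Nat.eq_dec k r); [subst; auto|auto]. }
        rewrite (H i Hi), (H j Hj). reflexivity.
      * specialize (Hg r j0 Hr Hj0n). cbv beta in Hg; rewrite !Hlt in Hg by auto; simpl in Hg.
        rewrite Nat.eqb_refl, Hne in Hg by auto. exact Hg.
Qed.

Lemma sim_ng n phi asg fr init : (2 <= n)%nat -> ~ gathered n init ->
  forall t, ~ gathered n (sim n phi asg fr init t).
Proof.
  intros Hn H0 t; induction t; simpl; auto. apply nxt_ng; auto.
Qed.

Theorem theoremT4050 :
  forall n : nat, (2 <= n)%nat ->
  forall (m : nat) (phi : nat -> target_fun),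
    (1 <= m <= n)%nat -> algorithm m phi -> ~ solves_FGP n m phi.
Proof.
  intros n Hn m phi Hm _ Hsol.
  set (asg := fun i => if Nat.ltb i m then i else 0%nat).
  set (fr := fun _ : nat => (1, 0) : pt).
  set (init := fun i => if Nat.eqb i 0 then (1, 0) else (0, 0) : pt).
  assert (Hasg : assignment n m asg).
  { split.
    - intros i Hi. unfold asg. destruct (Nat.ltb_spec i m); lia.
    - intros k Hk. exists k. split; [lia|]. unfold asg.
      destruct (Nat.ltb_spec k m); lia. }
  assert (Hfr : forall i, (i < n)%nat -> frame_ok (fr i)).
  { intros i _ E. unfold fr in E. injection E. intros. lra. }
  assert (Hinit : ~ gathered n init).
  { intro G. specialize (G 0%nat 1%nat ltac:(lia) ltac:(lia)). unfold init in G.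
    simpl in G. injection G. intros. lra. }
  pose (S := sim n phi asg fr init).
  assert (HS : forall t, ~ gathered n (S t)) by (apply sim_ng; auto).
  destruct (classic (exists t r0, gsel n phi asg fr (S t) = Some r0)) as [[t0 [r0 Ht0]]|Hno].
  -
    pose proof (gsel_some _ _ _ _ _ _ Ht0) as Hfz. destruct Hfz as [Hr0 [_ Hf]].
    set (act := fun t i => Nat.ltb i n && (if Nat.leb t0 t then true else choice n phi asg fr t (S t) i)).
    destruct (Hsol asg fr init act (Some (r0, t0)) Hasg Hfr) as [t Ht].
    + intros i t Hi. exists (t0 + t)%nat. split; [lia|]. unfold act.
      destruct (Nat.ltb_spec i n); [|lia]. destruct (Nat.leb_spec t0 (t0 + t)); [reflexivity|lia].
    + exact Hr0.
    + assert (E1 : forall t, (t <= t0)%nat -> exec n phi asg fr init act (Some (r0, t0)) t = S t).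
      { intro t1; induction t1 as [|t1 IHt1]; intros Hle; [reflexivity|].
        simpl. rewrite IHt1 by lia. apply functional_extensionality; intro i.
        unfold act, crashedb. destruct (Nat.leb_spec t0 t1); [lia|].
        rewrite andb_false_r. simpl. rewrite andb_true_r. reflexivity. }
      assert (E2 : forall k, exec n phi asg fr init act (Some (r0, t0)) (t0 + k) = S t0).
      { induction k. { rewrite Nat.add_0_r. apply E1; lia. }
        rewrite Nat.add_succ_r. simpl. rewrite IHk. apply functional_extensionality; intro i.
        unfold act, crashedb. destruct (Nat.leb_spec t0 (t0 + k)); [|lia].
        destruct (Nat.ltb_spec i n); destruct (Nat.eqb_spec r0 i); simpl; try reflexivity.
        change (dest n phi asg fr (S t0) i = S t0 i). apply Hf; auto. }
      destruct (Nat.le_gt_cases t t0) as [Hle|Hgt].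
      * rewrite E1 in Ht by exact Hle. exact (HS t Ht).
      * replace t with (t0 + (t - t0))%nat in Ht by lia. rewrite E2 in Ht. exact (HS t0 Ht).
  - set (act := fun t i => Nat.ltb i n && choice n phi asg fr t (S t) i).
    assert (Hnone : forall t, gsel n phi asg fr (S t) = None).
    { intro t. destruct (gsel n phi asg fr (S t)) eqn:E; [|reflexivity].
      exfalso; apply Hno; eauto. }
    destruct (Hsol asg fr init act None Hasg Hfr) as [t Ht].
    + intros i t Hi. exists (n * t + i)%nat. split; [nia|]. unfold act, choice.
      rewrite Hnone. destruct (Nat.ltb_spec i n); [|lia]. simpl.
      destruct (pdec _); [reflexivity|].
      apply Nat.eqb_eq. rewrite Nat.mul_comm, Nat.add_comm, Nat.Div0.mod_add.
      symmetry; apply Nat.mod_small; auto.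
    + exact I.
    + assert (E1 : forall t, exec n phi asg fr init act None t = S t).
      { intro t1; induction t1 as [|t1 IHt1]; [reflexivity|].
        simpl. rewrite IHt1. apply functional_extensionality; intro i.
        unfold act. simpl. rewrite andb_true_r. reflexivity. }
      rewrite E1 in Ht. exact (HS t Ht).
Qed.
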